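(* The functional $\tilde J:\mathcal F\times[0,+\infty)\to\mathbb{R}$, $\tilde J(f,c)=\frac12c^3I_1(f)-\frac12c^2gAI_2(f)$, has a unique global minimum at $(\mathrm{id},\frac23gA)$, where $\mathrm{id}(y)=y$.
   Context: $g>0$, $A\in(0,1)$ constants. $\mathcal F$ is the set of $f\in\mathcal C^1([-1,1])$ with $f(\pm1)=\pm1$, $f'(\pm1)>0$, $f(y)\in(-1,1)$ and $f(-y)=-f(y)$ for $y\in(-1,1)$. For $f\in\mathcal F$ let $F(y):=\int_{-1}^yf'(s)s\,ds$, $I_1(f):=\int_0^1\frac{F(y)^2}{1-f(y)^2}\,dy$ and $I_2(f):=\int_0^1(1-f(y))y\,dy$. *)

(* Defs.v *)
From Stdlib Require Import Reals.
From Coquelicot Require Import Coquelicot.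
Open Scope R_scope.

Definition Icl (y : R) : Prop := -1 <= y <= 1.

(* f is C^1 on [-1,1] with derivative df: f is continuous on [-1,1],
   differentiable on (-1,1) with derivative df, and df extends continuously
   to [-1,1].  df(-1), df(1) are then the one-sided derivatives f'(-1), f'(1). *)
Definition C1_on_I (f df : R -> R) : Prop :=
  (forall y, Icl y -> filterlim f (within Icl (locally y)) (locally (f y))) /\
  (forall y, -1 < y < 1 -> is_derive f y (df y)) /\
  (forall y, Icl y -> filterlim df (within Icl (locally y)) (locally (df y))).

Definition inF (f df : R -> R) : Prop :=
  C1_on_I f df /\
  f (-1) = -1 /\ f 1 = 1 /\
  df (-1) > 0 /\ df 1 > 0 /\
  (forall y, -1 < y < 1 -> -1 < f y < 1) /\
  (forall y, -1 < y < 1 -> f (- y) = - f y).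

Definition Fprim (df : R -> R) (y : R) : R := RInt (fun s => df s * s) (-1) y.

Definition I1 (f df : R -> R) : R :=
  RInt (fun y => (Fprim df y) ^ 2 / (1 - (f y) ^ 2)) 0 1.

Definition I2 (f : R -> R) : R := RInt (fun y => (1 - f y) * y) 0 1.

Definition Jt (g A : R) (f df : R -> R) (c : R) : R :=
  1/2 * c ^ 3 * I1 f df - 1/2 * c ^ 2 * g * A * I2 f.

(* Main.v *)
Require Import Defs.
From Stdlib Require Import Reals.
From Coquelicot Require Import Coquelicot.
From Stdlib Require Import Lra Psatz.
Open Scope R_scope.

Ltac rring := match goal with |- ?a = ?b => change (@eq R a b) end; cbv beta; ring.
Ltac rfield := match goal with |- ?a = ?b => change (@eq R a b) end; cbv beta; field.


Lemma ballR (x e y : R) : ball x e y <-> Rabs (y - x) < e.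
Proof. unfold ball; simpl; unfold AbsRing_ball, abs, minus, plus, opp; simpl. tauto. Qed.

Lemma c_const (a x:R) : continuous (fun _ : R => a) x.
Proof. apply continuous_const. Qed.
Lemma c_id (x:R) : continuous (fun y:R => y) x.
Proof. apply continuous_id. Qed.
Lemma c_plus (f g : R -> R) (x:R) : continuous f x -> continuous g x -> continuous (fun y => f y + g y) x.
Proof. intros; apply (continuous_plus f g x); auto. Qed.
Lemma c_mult (f g : R -> R) (x:R) : continuous f x -> continuous g x -> continuous (fun y => f y * g y) x.
Proof. intros; apply (continuous_mult f g x); auto. Qed.
Lemma c_opp (f : R -> R) (x:R) : continuous f x -> continuous (fun y => - f y) x.
Proof. intros; apply (continuous_opp f x); auto. Qed.
Lemma c_minus (f g : R -> R) (x:R) : continuous f x -> continuous g x -> continuous (fun y => f y - g y) x.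
Proof. intros; apply (continuous_minus f g x); auto. Qed.
Lemma c_pow2 (f : R -> R) (x:R) : continuous f x -> continuous (fun y => f y ^ 2) x.
Proof. intros H. apply continuous_ext with (f := fun y => f y * f y). intros y; simpl; ring. now apply c_mult. Qed.

Lemma d_mult (f g : R -> R) x a b : is_derive f x a -> is_derive g x b ->
  is_derive (fun t => f t * g t) x (a * g x + f x * b).
Proof. intros Ha Hb. apply (is_derive_mult f g x a b Ha Hb). intros; apply Rmult_comm. Qed.
Lemma d_plus (f g : R -> R) x a b : is_derive f x a -> is_derive g x b ->
  is_derive (fun t => f t + g t) x (a + b).
Proof. intros Ha Hb. apply (is_derive_plus f g x a b Ha Hb). Qed.
Lemma d_minus (f g : R -> R) x a b : is_derive f x a -> is_derive g x b ->
  is_derive (fun t => f t - g t) x (a - b).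
Proof. intros Ha Hb. apply (is_derive_minus f g x a b Ha Hb). Qed.
Lemma d_id (x:R) : is_derive (fun t:R => t) x 1.
Proof. auto_derive; auto. Qed.
Lemma d_const (a x:R) : is_derive (fun _:R => a) x 0.
Proof. auto_derive; auto. Qed.

Lemma cont_of_derive (f : R -> R) x l : is_derive f x l -> continuous f x.
Proof. intros H. apply (ex_derive_continuous (K:=R_AbsRing) (V:=R_NormedModule) f x). exists l. exact H. Qed.

Lemma ex_RInt_c (p : R -> R) a b : (forall z, continuous p z) -> ex_RInt p a b.
Proof. intros H. apply (ex_RInt_continuous (V:=R_CompleteNormedModule)). intros; apply H. Qed.

Lemma d_RInt (p : R -> R) a x : (forall z, continuous p z) -> is_derive (fun y => RInt p a y) x (p x).
Proof.
  intros H. apply is_derive_RInt with (a := a).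
  apply filter_forall. intros y. apply RInt_correct. apply ex_RInt_c; auto.
  apply H.
Qed.

Lemma ftc_open (P p : R -> R) a b : a <= b -> (forall x, continuous P x) -> (forall x, continuous p x) ->
  (forall x, a < x < b -> is_derive P x (p x)) -> RInt p a b = P b - P a.
Proof.
  intros hab HP Hp Hd.
  set (H := fun x => P x - RInt p a x).
  destruct (MVT_gen H a b (fun _ => 0)) as [c [_ Hc]].
  - rewrite Rmin_left, Rmax_right by lra. intros x Hx. unfold H.
    replace 0 with (p x - p x) by ring. apply d_minus. auto. apply d_RInt; auto.
  - intros x _. apply continuity_pt_filterlim. unfold H. apply c_minus. apply HP.
    apply (cont_of_derive _ _ (p x)). apply d_RInt; auto.
  - unfold H in Hc. rewrite RInt_point in Hc. unfold zero in Hc; simpl in Hc. lra.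
Qed.


Lemma RInt_lin (p r : R -> R) a b al be : ex_RInt p a b -> ex_RInt r a b ->
  RInt (fun x => al * p x + be * r x) a b = al * RInt p a b + be * RInt r a b.
Proof.
  intros H1 H2. apply is_RInt_unique.
  pose proof (is_RInt_scal p a b al (RInt p a b) (RInt_correct p a b H1)) as h1.
  pose proof (is_RInt_scal r a b be (RInt r a b) (RInt_correct r a b H2)) as h2.
  exact (is_RInt_plus _ _ a b _ _ h1 h2).
Qed.

Definition cl (y:R) := Rmax (-1) (Rmin 1 y).
Lemma cl_Icl y : Icl (cl y).
Proof. unfold cl, Icl, Rmax, Rmin. repeat destruct Rle_dec; lra. Qed.
Lemma cl_id y : Icl y -> cl y = y.
Proof. unfold cl, Icl, Rmax, Rmin. repeat destruct Rle_dec; lra. Qed.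
Lemma cl_lip a b : Rabs (cl a - cl b) <= Rabs (a - b).
Proof. unfold cl, Rmax, Rmin. repeat destruct Rle_dec; split_Rabs; lra. Qed.
Lemma cl_cont x : continuous cl x.
Proof.
  apply filterlim_locally. intros eps. exists eps. intros y Hy.
  apply ballR in Hy. apply ballR. eapply Rle_lt_trans. apply cl_lip. exact Hy.
Qed.

Lemma cont_within (f : R -> R) x :
  (forall y, Icl y -> filterlim f (within Icl (locally y)) (locally (f y))) ->
  continuous (fun y => f (cl y)) x.
Proof.
  intros H. unfold continuous.
  eapply filterlim_comp with (G := within Icl (locally (cl x))).
  - intros P HP. unfold within in HP. pose proof (cl_cont x _ HP) as HH. revert HH.
    unfold filtermap. apply filter_imp. intros y Hy. apply Hy. apply cl_Icl.
  - apply H. apply cl_Icl.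
Qed.

Lemma loc_interior x : -1 < x < 1 -> locally x (fun y => -1 < y < 1).
Proof.
  intros Hx. assert (He : 0 < Rmin (x+1) (1-x)) by (apply Rmin_pos; lra).
  exists (mkposreal _ He). intros y Hy. apply ballR in Hy. simpl in Hy.
  pose proof (Rmin_l (x+1) (1-x)) as h1. pose proof (Rmin_r (x+1) (1-x)) as h2. apply Rabs_def2 in Hy. unfold minus, plus, opp in Hy; simpl in Hy. lra.
Qed.

Lemma loc_cl x : -1 < x < 1 -> locally x (fun y => cl y = y).
Proof.
  intros Hx. apply (filter_imp (fun y => -1 < y < 1)). intros y Hy; apply cl_id; unfold Icl; lra.
  now apply loc_interior.
Qed.

Lemma zero_int (g : R -> R) : (forall z, continuous g z) -> (forall z, 0 < z < 1 -> 0 <= g z) ->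
  RInt g 0 1 = 0 -> forall z, 0 < z < 1 -> g z = 0.
Proof.
  intros Hc Hnn Hi z Hz. destruct (Rle_lt_or_eq_dec 0 (g z) (Hnn z Hz)) as [Hp|]; [|auto].
  exfalso.
  pose proof (Hc z) as Hl. unfold continuous in Hl. pose proof (proj1 (filterlim_locally (F:=locally z) g (g z)) Hl) as Hl2. clear Hl. rename Hl2 into Hl.
  destruct (Hl (mkposreal _ Hp)) as [d Hd]. simpl in Hd.
  set (a := Rmax 0 (z - d/2)). set (b := Rmin 1 (z + d/2)).
  assert (Hd2 : 0 < d) by apply cond_pos.
  assert (ha : 0 <= a < z) by (unfold a, Rmax; destruct Rle_dec; lra).
  assert (hb : z < b <= 1) by (unfold b, Rmin; destruct Rle_dec; lra).
  assert (hpos : forall y, a <= y <= b -> 0 < g y).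
  { intros y Hy. pose proof (Hd y) as H. revert H. rewrite !ballR. intros H.
    assert (Rabs (y - z) < d).
    { unfold a, b, Rmax, Rmin in Hy. repeat destruct Rle_dec in Hy; split_Rabs; lra. }
    specialize (H H0). split_Rabs; lra. }
  pose proof (RInt_Chasles g 0 a 1 (ex_RInt_c g 0 a Hc) (ex_RInt_c g a 1 Hc)) as e1.
  pose proof (RInt_Chasles g a b 1 (ex_RInt_c g a b Hc) (ex_RInt_c g b 1 Hc)) as e2.
  change plus with Rplus in e1, e2. simpl in e1, e2.
  assert (i1 : 0 <= RInt g 0 a).
  { replace 0 with (RInt (fun _ => 0) 0 a) at 1.
    apply RInt_le. lra. apply ex_RInt_c; intros; apply c_const. apply ex_RInt_c; auto.
    intros y Hy. apply Hnn. lra.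
    rewrite RInt_const. unfold scal; simpl; unfold mult; simpl; ring. }
  assert (i3 : 0 <= RInt g b 1).
  { replace 0 with (RInt (fun _ => 0) b 1) at 1.
    apply RInt_le. lra. apply ex_RInt_c; intros; apply c_const. apply ex_RInt_c; auto.
    intros y Hy. apply Hnn. lra.
    rewrite RInt_const. unfold scal; simpl; unfold mult; simpl; ring. }
  assert (i2 : 0 < RInt g a b).
  { apply RInt_gt_0. lra. intros; apply hpos; lra. intros; apply Hc. }
  lra.
Qed.


Definition fc (f : R -> R) (y : R) := f (cl y).
Definition dc (df : R -> R) (y : R) := df (cl y).
Definition Fc (df : R -> R) (y : R) := RInt (fun s => dc df s * s) (-1) y.
Definition qq (f df : R -> R) (y : R) := (Fc df y) ^ 2 / (1 - (fc f y) ^ 2).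

Lemma der_eq (g : R -> R) x l1 l2 : is_derive g x l1 -> l1 = l2 -> is_derive g x l2.
Proof. intros H ->; exact H. Qed.


Section S.
Variables (f df : R -> R).
Hypothesis Hf : inF f df.

Lemma fc_cont x : continuous (fc f) x.
Proof. destruct Hf as [[H _] _]. apply cont_within. exact H. Qed.
Lemma dc_cont x : continuous (dc df) x.
Proof. destruct Hf as [[_ [_ H]] _]. apply cont_within. exact H. Qed.
Lemma dcs_cont x : continuous (fun s => dc df s * s) x.
Proof. apply c_mult. apply dc_cont. apply c_id. Qed.
Lemma fc_der x : -1 < x < 1 -> is_derive (fc f) x (df x).
Proof.
  intros Hx. destruct Hf as [[_ [H _]] _].
  apply is_derive_ext_loc with (f := f). 2: now apply H.
  apply (filter_imp (fun y => cl y = y)). intros y Hy. unfold fc. now rewrite Hy.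
  now apply loc_cl.
Qed.
Lemma dc_int x : Icl x -> dc df x = df x.
Proof. intros H. unfold dc. now rewrite cl_id. Qed.
Lemma fc_int x : Icl x -> fc f x = f x.
Proof. intros H. unfold fc. now rewrite cl_id. Qed.
Lemma Fc_der x : is_derive (Fc df) x (dc df x * x).
Proof. unfold Fc. apply (d_RInt (fun s => dc df s * s)). apply dcs_cont. Qed.
Lemma Fc_cont x : continuous (Fc df) x.
Proof. eapply cont_of_derive. apply Fc_der. Qed.
Lemma Ifc_cont x : continuous (fun s => RInt (fc f) (-1) s) x.
Proof. eapply cont_of_derive. apply d_RInt. apply fc_cont. Qed.

Lemma fc_odd_int : RInt (fc f) (-1) 1 = 0.
Proof.
  destruct Hf as [_ [_ [_ [_ [_ [_ Hodd]]]]]].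
  pose proof (RInt_comp_lin (V:=R_CompleteNormedModule) (fc f) (-1) 0 (-1) 1) as H.
  replace (-1 * -1 + 0) with 1 in H by ring. replace (-1 * 1 + 0) with (-1) in H by ring.
  specialize (H (ex_RInt_c _ _ _ fc_cont)).
  rewrite <- (opp_RInt_swap (fc f) (-1) 1 (ex_RInt_c _ _ _ fc_cont)) in H.
  match type of H with ?L = _ => assert (E : L = RInt (fc f) (-1) 1) end.
  { apply RInt_ext. intros x Hx. rewrite Rmin_left in Hx by lra. rewrite Rmax_right in Hx by lra.
    unfold scal; simpl; unfold mult; simpl.
    replace (-1 * x + 0) with (- x) by ring.
    rewrite !fc_int by (unfold Icl; lra). rewrite Hodd by lra. ring. }
  rewrite E in H. unfold opp in H; simpl in H. lra.
Qed.

Lemma f1 : f 1 = 1.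
Proof. destruct Hf as [_ [_ [H _]]]. exact H. Qed.
Lemma fm1 : f (-1) = -1.
Proof. destruct Hf as [_ [H _]]. exact H. Qed.
Lemma fc1 : fc f 1 = 1.
Proof. rewrite fc_int. apply f1. unfold Icl; lra. Qed.

Lemma Fc1 : Fc df 1 = 0.
Proof.
  unfold Fc.
  rewrite (ftc_open (fun s => s * fc f s - RInt (fc f) (-1) s) (fun s => dc df s * s) (-1) 1).
  - rewrite fc_odd_int, RInt_point. rewrite !fc_int by (unfold Icl; lra). rewrite f1, fm1.
    unfold zero; simpl. ring.
  - lra.
  - intros x. apply c_minus. apply c_mult. apply c_id. apply fc_cont. apply Ifc_cont.
  - apply dcs_cont.
  - intros x Hx. eapply der_eq. apply d_minus. apply d_mult. apply d_id. apply fc_der. lra.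
    apply d_RInt. apply fc_cont.
    rewrite dc_int by (unfold Icl; lra). rring.
Qed.

Lemma intFc : RInt (fun y => Fc df y + 2 * ((1 - fc f y) * y)) 0 1 = 0.
Proof.
  rewrite (ftc_open (fun y => y * Fc df y - (y * y) * fc f y + y * y) _ 0 1).
  - rewrite Fc1, fc1. rring.
  - lra.
  - intros x. apply c_plus. apply c_minus. apply c_mult. apply c_id. apply Fc_cont.
    apply c_mult. apply c_mult; apply c_id. apply fc_cont. apply c_mult; apply c_id.
  - intros x. apply c_plus. apply Fc_cont. apply c_mult. apply c_const. apply c_mult.
    apply c_minus. apply c_const. apply fc_cont. apply c_id.
  - intros x Hx. eapply der_eq. apply d_plus. apply d_minus. apply d_mult. apply d_id. apply Fc_der.
    apply d_mult. apply d_mult; apply d_id. apply fc_der. lra. apply d_mult; apply d_id.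
    rewrite dc_int by (unfold Icl; lra). rring.
Qed.

End S.



Lemma RInt_const_R (a b v : R) : RInt (fun _ => v) a b = (b - a) * v.
Proof. rewrite RInt_const. reflexivity. Qed.

Section S.
Variables (f df : R -> R).
Hypothesis Hf : inF f df.

Lemma fc_range y : -1 < y < 1 -> -1 < fc f y < 1.
Proof. intros Hy. rewrite fc_int by (unfold Icl; lra). destruct Hf as [_ [_ [_ [_ [_ [H _]]]]]]. auto. Qed.

Lemma qq_cont_lt1 z : 0 <= z < 1 -> continuous (qq f df) z.
Proof.
  intros Hz. unfold qq. unfold Rdiv. apply c_mult. apply c_pow2. apply (Fc_cont f df Hf).
  apply continuous_Rinv_comp. apply c_minus. apply c_const. apply c_pow2. apply (fc_cont f df Hf).
  pose proof (fc_range z ltac:(lra)). nra.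
Qed.

Lemma qq_cont1 : continuous (qq f df) 1.
Proof.
  assert (HD : df 1 > 0) by (destruct Hf as [_ [_ [_ [_ [H _]]]]]; exact H).
  set (D := df 1) in *.
  assert (q1 : qq f df 1 = 0).
  { unfold qq. rewrite (Fc1 f df Hf). unfold Rdiv. ring. }
  unfold continuous. apply (proj2 (filterlim_locally (F:=locally 1) (qq f df) (qq f df 1))).
  intros eps.
  pose proof (dc_cont f df Hf 1) as Hc. unfold continuous in Hc.
  pose proof (proj1 (filterlim_locally (F:=locally 1) (dc df) (dc df 1)) Hc) as Hc2.
  assert (HD2 : 0 < D / 2) by lra.
  destruct (Hc2 (mkposreal _ HD2)) as [d1 Hd1]. simpl in Hd1.
  assert (dc1 : dc df 1 = D) by (apply dc_int; unfold Icl; lra).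
  rewrite dc1 in Hd1.
  assert (Hd1p : 0 < d1) by apply cond_pos.
  assert (Hep : 0 < eps) by apply cond_pos.
  assert (Hdel : 0 < Rmin (Rmin d1 (1/2)) (Rmin (2/(3*D)) (2*eps/(9*D)))).
  { apply Rmin_pos; apply Rmin_pos; try lra; apply Rdiv_lt_0_compat; lra. }
  exists (mkposreal _ Hdel). intros y Hy. apply ballR in Hy. simpl in Hy. apply ballR. rewrite q1.
  pose proof (Rmin_l (Rmin d1 (1/2)) (Rmin (2/(3*D)) (2*eps/(9*D)))) as m1.
  pose proof (Rmin_r (Rmin d1 (1/2)) (Rmin (2/(3*D)) (2*eps/(9*D)))) as m2.
  pose proof (Rmin_l d1 (1/2)). pose proof (Rmin_r d1 (1/2)).
  pose proof (Rmin_l (2/(3*D)) (2*eps/(9*D))). pose proof (Rmin_r (2/(3*D)) (2*eps/(9*D))).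
  apply Rabs_def2 in Hy. unfold minus, plus, opp in Hy; simpl in Hy.
  destruct (Rle_lt_dec 1 y) as [Hy1|Hy1].
  - assert (fc f y = 1). { unfold fc. replace (cl y) with 1. apply (f1 f df Hf).
      unfold cl, Rmax, Rmin. repeat destruct Rle_dec; lra. }
    unfold qq. rewrite H3. replace (1 - 1 ^ 2) with 0 by ring. unfold Rdiv. rewrite Rinv_0.
    rewrite Rmult_0_r, Rminus_0_r, Rabs_R0. lra.
  - set (u := 1 - y).
    assert (hu : 0 < u < d1 /\ u < 1/2 /\ u < 2/(3*D) /\ u < 2*eps/(9*D)) by (unfold u; lra).
    assert (Hdc : forall s, y < s < 1 -> D/2 < dc df s < 3*D/2).
    { intros s Hs. pose proof (Hd1 s) as Hs2. rewrite !ballR in Hs2.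
      assert (H4 : Rabs (s - 1) < d1) by (apply Rabs_def1; lra). specialize (Hs2 H4).
      apply Rabs_def2 in Hs2. unfold minus, plus, opp in Hs2; simpl in Hs2. lra. }
    assert (eq1 : RInt (dc df) y 1 = 1 - fc f y).
    { rewrite (ftc_open (fc f) (dc df) y 1). rewrite (fc1 f df Hf). rring. lra.
      apply (fc_cont f df Hf). apply (dc_cont f df Hf).
      intros x Hx. rewrite dc_int by (unfold Icl; lra). apply (fc_der f df Hf); lra. }
    assert (lo1 : D/2 * u <= RInt (dc df) y 1).
    { replace (D/2*u) with (RInt (fun _ => D/2) y 1) by (rewrite RInt_const_R; unfold u; rring).
      apply RInt_le. lra. apply ex_RInt_c; intros; apply c_const. apply ex_RInt_c; apply (dc_cont f df Hf).
      intros x Hx. pose proof (Hdc x Hx). lra. }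
    assert (hi1 : RInt (dc df) y 1 <= 3*D/2 * u).
    { replace (3*D/2*u) with (RInt (fun _ => 3*D/2) y 1) by (rewrite RInt_const_R; unfold u; rring).
      apply RInt_le. lra. apply ex_RInt_c; apply (dc_cont f df Hf). apply ex_RInt_c; intros; apply c_const.
      intros x Hx. pose proof (Hdc x Hx). lra. }
    assert (eq2 : Fc df y + RInt (fun s => dc df s * s) y 1 = 0).
    { rewrite <- (Fc1 f df Hf). unfold Fc.
      pose proof (RInt_Chasles (V:=R_CompleteNormedModule) (fun s => dc df s * s) (-1) y 1
        (ex_RInt_c _ _ _ (dcs_cont f df Hf)) (ex_RInt_c _ _ _ (dcs_cont f df Hf))) as HC.
      exact HC. }
    assert (lo2 : 0 <= RInt (fun s => dc df s * s) y 1).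
    { replace 0 with (RInt (fun _ => 0) y 1) at 1 by (rewrite RInt_const_R; rring).
      apply RInt_le. lra. apply ex_RInt_c; intros; apply c_const. apply ex_RInt_c; apply (dcs_cont f df Hf).
      intros x Hx. pose proof (Hdc x Hx). nra. }
    assert (hi2 : RInt (fun s => dc df s * s) y 1 <= 3*D/2 * u).
    { replace (3*D/2*u) with (RInt (fun _ => 3*D/2) y 1) by (rewrite RInt_const_R; unfold u; rring).
      apply RInt_le. lra. apply ex_RInt_c; apply (dcs_cont f df Hf). apply ex_RInt_c; intros; apply c_const.
      intros x Hx. pose proof (Hdc x Hx). nra. }
    set (X := Fc df y) in *. set (Z := fc f y) in *.
    assert (hu3 : 3*D/2*u < 1). { destruct hu as [_ [_ [hu3 _]]]. apply Rmult_lt_compat_l with (r := 3*D/2) in hu3; [|lra]. replace (3*D/2*(2/(3*D))) with 1 in hu3 by (field; lra). lra. }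
    assert (hZ : 0 <= Z) by lra.
    assert (hden : D/2*u <= 1 - Z^2) by nra.
    assert (hdp : 0 < 1 - Z^2) by nra.
    assert (hq : qq f df y * (1 - Z^2) = X^2) by (unfold qq; fold X Z; field; lra).
    assert (hX : X^2 <= (3*D/2*u)^2) by nra.
    assert (hq2 : qq f df y * (1 - Z^2) <= (9*D/2*u) * (1 - Z^2)) by nra.
    assert (hq3 : qq f df y <= 9*D/2*u) by (apply Rmult_le_reg_r with (1 - Z^2); lra).
    assert (hq4 : 0 <= qq f df y).
    { unfold qq. fold X Z. unfold Rdiv. apply Rmult_le_pos. nra. left; apply Rinv_0_lt_compat; lra. }
    assert (9*D/2*u < eps).
    { destruct hu as [_ [_ [_ hu4]]]. apply Rmult_lt_reg_r with (2/(9*D)). apply Rdiv_lt_0_compat; lra.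
      replace (9 * D / 2 * u * (2 / (9 * D))) with u by (field; lra).
      replace (eps * (2/(9*D))) with (2*eps/(9*D)) by (field; lra). exact hu4. }
    rewrite Rminus_0_r. rewrite Rabs_right by lra. lra.
Qed.

Lemma qq_cont z : 0 <= z <= 1 -> continuous (qq f df) z.
Proof. intros Hz. destruct (Req_dec z 1) as [->|]. apply qq_cont1. apply qq_cont_lt1. lra. Qed.

Lemma I1_eq : I1 f df = RInt (qq f df) 0 1.
Proof.
  unfold I1. apply RInt_ext. rewrite Rmin_left, Rmax_right by lra. intros x Hx.
  unfold qq. rewrite fc_int by (unfold Icl; lra). f_equal. f_equal. unfold Fprim, Fc.
  apply RInt_ext. rewrite Rmin_left, Rmax_right by lra. intros s Hs.
  rewrite dc_int by (unfold Icl; lra). reflexivity.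
Qed.

Lemma I2_eq : I2 f = RInt (fun y => (1 - fc f y) * y) 0 1.
Proof.
  unfold I2. apply RInt_ext. rewrite Rmin_left, Rmax_right by lra. intros x Hx.
  rewrite fc_int by (unfold Icl; lra). reflexivity.
Qed.

End S.



Lemma pz (x:R) n : x ^ n = 0 -> x = 0.
Proof. intros H. destruct (Req_dec x 0) as [|H0]; auto. exfalso. exact (pow_nonzero x n H0 H). Qed.

Lemma RInt_nonneg (g : R -> R) a b : a <= b -> (forall z, continuous g z) ->
  (forall y, a < y < b -> 0 <= g y) -> 0 <= RInt g a b.
Proof.
  intros hab Hc Hp. replace 0 with (RInt (fun _ => 0) a b) at 1.
  apply RInt_le. lra. apply ex_RInt_c; intros; apply c_const. apply ex_RInt_c; auto. auto.
  rewrite RInt_const. unfold scal; simpl; unfold mult; simpl; ring.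
Qed.

Lemma E_bound (h : R -> R) (c k : R) : (forall z, continuous h z) ->
  (forall y, 0 < y < 1 -> 0 < h y) -> 0 < c -> 0 < k ->
  -8*k^3/324 <= RInt (fun y => c*k/9 * (k * h y ^ 2 + (3*c*y - 2*k) * h y)) 0 1 /\
  (RInt (fun y => c*k/9 * (k * h y ^ 2 + (3*c*y - 2*k) * h y)) 0 1 = -8*k^3/324 ->
     3*c = 2*k /\ forall y, 0 < y < 1 -> h y = 1 - y).
Proof.
  intros Hc Hp hc hk.
  set (E := fun y => c*k/9 * (k * h y ^ 2 + (3*c*y - 2*k) * h y)).
  set (m := fun y => -(c/36) * (2*k - 3*c*y)^2).
  set (g := fun y => c*k^2/9 * (h y - (2*k - 3*c*y)/(2*k))^2).
  assert (Ec : forall z, continuous E z).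
  { intros z. unfold E. apply c_mult. apply c_const. apply c_plus. apply c_mult. apply c_const.
    apply c_pow2. auto. apply c_mult. apply c_minus. apply c_mult. apply c_const. apply c_id.
    apply c_const. auto. }
  assert (mc : forall z, continuous m z).
  { intros z. unfold m. apply c_mult. apply c_const. apply c_pow2. apply c_minus. apply c_const.
    apply c_mult. apply c_const. apply c_id. }
  assert (gc : forall z, continuous g z).
  { intros z. unfold g. apply c_mult. apply c_const. apply c_pow2. apply c_minus. auto.
    apply c_mult. apply c_minus. apply c_const. apply c_mult. apply c_const. apply c_id. apply c_const. }
  assert (Eeq : forall y, E y = 1 * m y + 1 * g y).
  { intros y. unfold E, m, g. field. lra. }
  assert (gnn : forall y, 0 <= g y).
  { intros y. unfold g. assert (0 < c*k^2/9) by (apply Rdiv_lt_0_compat; [apply Rmult_lt_0_compat; [lra | apply pow_lt; lra] | lra]). apply Rmult_le_pos; [lra | apply pow2_ge_0]. }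
  assert (Mint : forall a b, a <= b -> RInt m a b = (2*k - 3*c*b)^3/324 - (2*k - 3*c*a)^3/324).
  { intros a b hab. rewrite (ftc_open (fun y => (2*k - 3*c*y)^3/324) m a b hab).
    reflexivity.
    intros x. apply (cont_of_derive _ _ (m x)). unfold m. auto_derive. auto. field.
    auto.
    intros x _. unfold m. auto_derive. auto. field. }
  assert (Esplit : forall a b, a <= b -> RInt E a b = RInt m a b + RInt g a b).
  { intros a b hab. rewrite (RInt_ext E (fun y => 1 * m y + 1 * g y)).
    rewrite RInt_lin. rring. apply ex_RInt_c; auto. apply ex_RInt_c; auto.
    intros; apply Eeq. }
  destruct (Rle_lt_dec (3*c) (2*k)) as [Hck|Hck].
  - rewrite (Esplit 0 1) by lra. rewrite Mint by lra.
    assert (G0 : 0 <= RInt g 0 1) by (apply RInt_nonneg; auto; lra).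
    assert (cube : 0 <= (2*k - 3*c*1)^3) by (apply pow_le; lra).
    split. replace ((2*k - 3*c*0)^3) with (8*k^3) by ring. lra.
    intros Heq.
    replace ((2*k - 3*c*0)^3) with (8*k^3) in Heq by ring.
    assert (Hz : (2*k - 3*c*1)^3 = 0) by lra.
    assert (Hck2 : 2*k - 3*c*1 = 0) by (apply pz with 3%nat; exact Hz).
    assert (Gz : RInt g 0 1 = 0) by lra.
    split. lra.
    intros y Hy. pose proof (zero_int g gc (fun z _ => gnn z) Gz y Hy) as Hg.
    unfold g in Hg. apply Rmult_integral in Hg. destruct Hg as [Hg|Hg].
    exfalso. assert (0 < c*k^2/9). { apply Rmult_lt_0_compat. apply Rmult_lt_0_compat. lra. nra. lra. } lra.
    apply pz in Hg.
    replace (2*k - 3*c*y) with (2*k*(1-y)) in Hg by nra.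
    replace (2*k*(1-y)/(2*k)) with (1-y) in Hg by (field; lra). lra.
  - set (y0 := 2*k/(3*c)).
    assert (hy0 : 0 < y0 < 1).
    { unfold y0. split. apply Rdiv_lt_0_compat; lra.
      apply Rmult_lt_reg_r with (3*c). lra. replace (2*k/(3*c)*(3*c)) with (2*k) by (field; lra). lra. }
    rewrite <- (RInt_Chasles (V:=R_CompleteNormedModule) E 0 y0 1 (ex_RInt_c _ _ _ Ec) (ex_RInt_c _ _ _ Ec)).
    change plus with Rplus; simpl.
    rewrite (Esplit 0 y0) by lra. rewrite Mint by lra.
    assert (G0 : 0 <= RInt g 0 y0) by (apply RInt_nonneg; auto; lra).
    replace ((2*k - 3*c*y0)) with 0 by (unfold y0; field; lra).
    replace ((2*k - 3*c*0)^3) with (8*k^3) by ring.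
    assert (Pos : 0 < RInt E y0 1).
    { apply RInt_gt_0. lra. 2: (intros; apply Ec).
      intros y Hy. unfold E. pose proof (Hp y ltac:(lra)) as hy.
      assert (3*c*y > 2*k).
      { assert (y0 * (3*c) < y * (3*c)) by (apply Rmult_lt_compat_r; lra).
        unfold y0 in H. replace (2*k/(3*c)*(3*c)) with (2*k) in H by (field; lra). lra. }
      apply Rmult_lt_0_compat. apply Rmult_lt_0_compat. nra. lra. nra. }
    split. replace (0^3) with 0 by ring. lra.
    intros Heq. exfalso. replace (0^3) with 0 in Heq by ring. lra.
Qed.



Lemma ex_RInt_01 (p : R -> R) : (forall z, 0 <= z <= 1 -> continuous p z) -> ex_RInt p 0 1.
Proof. intros H. apply (ex_RInt_continuous (V:=R_CompleteNormedModule)). rewrite Rmin_left, Rmax_right by lra. auto. Qed.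

Lemma main_ineq (f df : R -> R) (Hf : inF f df) (c k : R) : 0 < c -> 0 < k ->
  RInt (fun y => c*k/9 * (k * (1 - fc f y) ^ 2 + (3*c*y - 2*k) * (1 - fc f y))) 0 1
  <= c^3 * I1 f df - c^2 * k * I2 f.
Proof.
  intros hc hk. rewrite I1_eq, I2_eq.
  set (mu := k / (3*c)).
  set (E := fun y => c*k/9 * (k * (1 - fc f y) ^ 2 + (3*c*y - 2*k) * (1 - fc f y))).
  set (p := fun y => Fc df y + 2 * ((1 - fc f y) * y)).
  set (hy := fun y => (1 - fc f y) * y).
  assert (Ec : forall z, continuous E z).
  { intros z. unfold E. apply c_mult. apply c_const. apply c_plus. apply c_mult. apply c_const.
    apply c_pow2. apply c_minus. apply c_const. apply (fc_cont f df Hf).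
    apply c_mult. apply c_minus. apply c_mult. apply c_const. apply c_id.
    apply c_const. apply c_minus. apply c_const. apply (fc_cont f df Hf). }
  assert (hyc : forall z, continuous hy z).
  { intros z. unfold hy. apply c_mult. apply c_minus. apply c_const. apply (fc_cont f df Hf). apply c_id. }
  assert (pc : forall z, continuous p z).
  { intros z. unfold p. apply c_plus. apply (Fc_cont f df Hf). apply c_mult. apply c_const. apply hyc. }
  assert (qex : ex_RInt (qq f df) 0 1) by (apply ex_RInt_01; apply (qq_cont f df Hf)).
  assert (L1 : RInt E 0 1 = RInt (fun y => 1 * E y + (-2*mu*c^3) * p y) 0 1).
  { rewrite RInt_lin. unfold p. rewrite (intFc f df Hf). rewrite Rmult_0_r, Rplus_0_r, Rmult_1_l; reflexivity. apply ex_RInt_c; auto. apply ex_RInt_c; auto. }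
  assert (L2 : c^3 * RInt (qq f df) 0 1 - c^2 * k * RInt hy 0 1 =
               RInt (fun y => c^3 * qq f df y + (-(c^2*k)) * hy y) 0 1).
  { rewrite RInt_lin. rring. exact qex. apply ex_RInt_c; auto. }
  fold E. fold hy. rewrite L1, L2.
  apply RInt_le. lra.
  apply ex_RInt_c. intros z. apply c_plus; apply c_mult; try apply c_const; auto.
  apply ex_RInt_01. intros z Hz. apply c_plus; apply c_mult; try apply c_const; auto.
  apply (qq_cont f df Hf); auto.
  intros y Hy. unfold E, p, hy.
  pose proof (fc_range f df Hf y ltac:(lra)) as HZ.
  set (X := Fc df y) in *. set (Z := fc f y) in *. set (Q := qq f df y) in *.
  assert (hD : 0 < 1 - Z^2) by nra.
  assert (hQ : Q * (1 - Z^2) = X^2) by (unfold Q, qq; fold X Z; field; lra).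
  assert (hS : 0 <= Q + 2*mu*X + mu^2*(1 - Z^2)).
  { assert (H1 : (Q + 2*mu*X + mu^2*(1 - Z^2)) * (1 - Z^2) = (X + mu*(1-Z^2))^2) by nra.
    destruct (Rle_lt_dec 0 (Q + 2*mu*X + mu^2*(1 - Z^2))) as [|Hn]; auto.
    exfalso. assert (0 <= (X + mu*(1-Z^2))^2) by apply pow2_ge_0. nra. }
  assert (Hid : c^3 * Q + - (c^2*k) * ((1 - Z) * y) - (1 * (c*k/9 * (k*(1-Z)^2 + (3*c*y - 2*k)*(1-Z))) + -2*mu*c^3 * (X + 2*((1-Z)*y)))
     = c^3 * (Q + 2*mu*X + mu^2*(1 - Z^2))).
  { unfold mu. field. lra. }
  assert (0 <= c^3 * (Q + 2*mu*X + mu^2*(1 - Z^2))) by (apply Rmult_le_pos; [apply pow_le; lra | exact hS]).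
  lra.
Qed.



Lemma inF_id : inF (fun y => y) (fun _ => 1).
Proof.
  split; [split; [|split]|].
  - intros y _. unfold filterlim, filter_le, filtermap, within. intros P HP. apply (filter_imp P). intros x Hx _. exact Hx. exact HP.
  - intros y _. apply d_id.
  - intros y _. apply filterlim_const.
  - repeat split; intros; lra.
Qed.

Lemma poly_cont_all (P : R -> R) (dP : R -> R) : (forall x, is_derive P x (dP x)) -> forall x, continuous P x.
Proof. intros H x. apply (cont_of_derive _ _ (dP x)). auto. Qed.

Lemma I1_id : I1 (fun y => y) (fun _ => 1) = 1/6.
Proof.
  unfold I1. rewrite (RInt_ext _ (fun y => (1 - y^2)/4)).
  - rewrite (ftc_open (fun y => (y - y^3/3)/4) _ 0 1). field. lra.
    apply (poly_cont_all _ (fun y => (1 - y^2)/4)). intros x. auto_derive. auto. field.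
    apply (poly_cont_all _ (fun y => - (2*y)/4)). intros x. auto_derive. auto. field.
    intros x _. auto_derive. auto. field.
  - rewrite Rmin_left, Rmax_right by lra. intros x Hx.
    assert (HF : Fprim (fun _ => 1) x = (x^2 - 1)/2).
    { unfold Fprim. rewrite (ftc_open (fun s => s^2/2) _ (-1) x). rfield. lra.
      apply (poly_cont_all _ (fun s => s)). intros z. auto_derive. auto. field.
      intros z. apply c_mult. apply c_const. apply c_id.
      intros z _. auto_derive. auto. field. }
    rewrite HF. rfield. nra.
Qed.

Lemma I2_id : I2 (fun y => y) = 1/6.
Proof.
  unfold I2. rewrite (ftc_open (fun y => y^2/2 - y^3/3) _ 0 1). field. lra.
  apply (poly_cont_all _ (fun y => (1 - y) * y)). intros x. auto_derive. auto. field.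
  intros z. apply c_mult. apply c_minus. apply c_const. apply c_id. apply c_id.
  intros x _. auto_derive. auto. field.
Qed.

Lemma Jid (g A : R) : Jt g A (fun y => y) (fun _ => 1) (2/3 * g * A) = - (g*A)^3/81.
Proof. unfold Jt. rewrite I1_id, I2_id. field. Qed.

Theorem lemma4p3 (g A : R) (hg : 0 < g) (hA0 : 0 < A) (hA1 : A < 1) :
  inF (fun y => y) (fun _ => 1) /\
  forall (f df : R -> R) (c : R), inF f df -> 0 <= c ->
    Jt g A (fun y => y) (fun _ => 1) (2/3 * g * A) <= Jt g A f df c /\
    (Jt g A f df c = Jt g A (fun y => y) (fun _ => 1) (2/3 * g * A) ->
       c = 2/3 * g * A /\ forall y, -1 <= y <= 1 -> f y = y).
Proof.
  split. exact inF_id.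
  intros f df c Hf hc. rewrite Jid.
  set (k := g * A). assert (hk : 0 < k) by (unfold k; nra).
  assert (Jk : Jt g A f df c = 1/2 * (c^3 * I1 f df - c^2 * k * I2 f)) by (unfold Jt, k; ring).
  rewrite Jk.
  assert (hk3 : 0 < k^3) by (apply pow_lt; lra).
  destruct (Req_dec c 0) as [->|hc0].
  { split. replace (1/2 * (0^3 * I1 f df - 0^2 * k * I2 f)) with 0 by ring. lra.
    intros H. exfalso. replace (1/2 * (0^3 * I1 f df - 0^2 * k * I2 f)) with 0 in H by ring. lra. }
  assert (hcp : 0 < c) by lra.
  pose proof (main_ineq f df Hf c k hcp hk) as HM.
  assert (hcont : forall z, continuous (fun y => 1 - fc f y) z).
  { intros z. apply c_minus. apply c_const. apply (fc_cont f df Hf). }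
  assert (hpos : forall y, 0 < y < 1 -> 0 < 1 - fc f y).
  { intros y Hy. pose proof (fc_range f df Hf y ltac:(lra)). lra. }
  destruct (E_bound (fun y => 1 - fc f y) c k hcont hpos hcp hk) as [EB1 EB2].
  split. lra.
  intros Heq.
  assert (HE : RInt (fun y => c*k/9 * (k * (1 - fc f y) ^ 2 + (3*c*y - 2*k) * (1 - fc f y))) 0 1 = -8*k^3/324) by lra.
  destruct (EB2 HE) as [Hc Hh].
  split. unfold k in Hc. lra.
  destruct Hf as [_ [Hm1 [H1 [_ [_ [_ Hodd]]]]]].
  assert (Hpos : forall y, 0 < y < 1 -> f y = y).
  { intros y Hy. pose proof (Hh y Hy) as Hy2. rewrite fc_int in Hy2 by (unfold Icl; lra). lra. }
  intros y Hy.
  destruct (Rtotal_order y 0) as [Hlt|[Heq0|Hgt]].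
  - destruct (Req_dec y (-1)) as [->|Hn]. exact Hm1.
    replace y with (- (- y)) by ring. rewrite Hodd by lra. rewrite Hpos by lra. ring.
  - subst y. pose proof (Hodd 0 ltac:(lra)) as H0. replace (-0) with 0 in H0 by ring. lra.
  - destruct (Req_dec y 1) as [->|Hn]. exact H1. apply Hpos. lra.
Qed.
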